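(* Let $p$ be a prime, $s\geq 2$, and let $t_1\geq 1,t_2,\dots,t_s$ be nonnegative integers with $t_s\geq 1$. Let $\mathcal{H}_s=\mathcal{H}^{t_1,\dots,t_s}$ (a $\mathbb{Z}_{p^s}$-additive code) and $\mathcal{H}_{s+1}=\mathcal{H}^{1,t_1-1,t_2,\dots,t_{s-1},t_s-1}$ (a $\mathbb{Z}_{p^{s+1}}$-additive code). Then $H_s=\Phi_s(\mathcal{H}_s)$ is permutation equivalent to $H_{s+1}=\Phi_{s+1}(\mathcal{H}_{s+1})$, i.e. there is a coordinate permutation $\pi$ with $H_{s+1}=\pi(H_s)$.
   Context: For $r\geq 1$ and $u\in\mathbb{Z}_{p^r}$ with $p$-ary expansion $u=\sum_{i=0}^{r-1}u_ip^i$, the Gray map $\phi_r:\mathbb{Z}_{p^r}\to\mathbb{Z}_p^{p^{r-1}}$ is $\phi_r(u)=(u_{r-1},\dots,u_{r-1})+(u_0,\dots,u_{r-2})Y_{r-1}$, where $Y_1=(0\ 1\ \cdots\ p-1)$ and $Y_k$ is the $k\times p^k$ matrix with first $k-1$ rows $(Y_{k-1}\ \cdots\ Y_{k-1})$ ($p$ copies) and last row $(0,\dots,0,1,\dots,1,\dots,p-1,\dots,p-1)$ (constant blocks of length $p^{k-1}$); $\phi_1$ is the identity; $\Phi_r$ applies $\phi_r$ coordinatewise and concatenates. For a ring $\mathbb{Z}_{p^r}$ and $1\le i\le r$ let $T_i=\{jp^{i-1}:0\le j\le p^{r-i+1}-1\}$. For nonnegative integers $a_1\ge 1,a_2,\dots,a_r$,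 $A^{a_1,\dots,a_r}$ is the matrix over $\mathbb{Z}_{p^r}$ whose columns are all $\mathbf{z}^T$ with $\mathbf{z}\in\{1\}\times T_1^{a_1-1}\times T_2^{a_2}\times\cdots\times T_r^{a_r}$, and $\mathcal{H}^{a_1,\dots,a_r}\subseteq\mathbb{Z}_{p^r}^n$ is the subgroup generated by its rows. *)

(* Defs.v *)
(* Elements of Z_{p^r} and Z_p are represented by their
   canonical representatives in nat (in [0, p^r) resp. [0, p)); vectors are
   seq nat; codes are predicates on seq nat. *)
From mathcomp Require Import all_boot all_order.
From mathcomp Require Import perm.
Set Implicit Arguments. Unset Strict Implicit. Unset Printing Implicit Defensive.

Section Defs.
Variable p : nat.

Definition digit (u i : nat) : nat := (u %/ p ^ i) %% p.

(* Yrec k = Y_{k+1}, as a list of rows, defined by the recursion of the paper: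
   Y_1 = (0 1 ... p-1);  Y_{k+1} = [ (Y_k ... Y_k) (p copies) ;
                                    (0..0 1..1 ... p-1..p-1) blocks of length p^k ] *)
Fixpoint Yrec (k : nat) : seq (seq nat) :=
  match k with
  | 0 => [:: iota 0 p]
  | k'.+1 => [seq flatten (nseq p row) | row <- Yrec k'] ++
             [:: flatten [seq nseq (p ^ k'.+1) j | j <- iota 0 p]]
  end.

Definition Ymat (k : nat) : seq (seq nat) := Yrec k.-1.

(* phi_r(u) = (u_{r-1},...,u_{r-1}) + (u_0,...,u_{r-2}) Y_{r-1}  over Z_p;
   phi_1 = identity *)
Definition phi (r u : nat) : seq nat :=
  if r <= 1 then [:: u] else
  [seq (digit u r.-1 +
        \sum_(i < r.-1) digit u i * nth 0 (nth [::] (Ymat r.-1) i) j) %% p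
  | j <- iota 0 (p ^ r.-1)].

Definition Phi (r : nat) (w : seq nat) : seq nat := flatten (map (phi r) w).

Definition Tset (r i : nat) : seq nat := [seq j * p ^ i.-1 | j <- iota 0 (p ^ (r - i).+1)].

(* the list of factors {1} x T_1^{a_1-1} x T_2^{a_2} x ... x T_r^{a_r},
   where r = size a *)
Definition factors (a : seq nat) : seq (seq nat) :=
  let r := size a in
  [:: [:: 1]] ++ nseq (head 0 a).-1 (Tset r 1) ++
  flatten [seq nseq (nth 0 a i.-1) (Tset r i) | i <- iota 2 r.-1].

Definition cprod (F : seq (seq nat)) : seq (seq nat) :=
  foldr (fun S acc => [seq x :: v | x <- S, v <- acc]) [:: [::]] F.

(* the columns z^T of A^{a_1,...,a_r} (each column as the list of its entries) *)
Definition Acols (a : seq nat) : seq (seq nat) := cprod (factors a).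

(* the codeword  sum_k c_k (row k of A)  in Z_{p^r}^n, r = size a *)
Definition Hword (a : seq nat) (c : seq nat) : seq nat :=
  [seq (sumn [seq x.1 * x.2 | x <- zip c z]) %% p ^ (size a) | z <- Acols a].

(* H^{a_1,...,a_r}: the subgroup of Z_{p^r}^n generated by the rows of A,
   i.e. the set of all integer (equivalently nonnegative) combinations of them *)
Definition inH (a : seq nat) (w : seq nat) : Prop := exists c : seq nat, w = Hword a c.

Definition inPhiH (a : seq nat) (w : seq nat) : Prop :=
  exists v, inH a v /\ w = Phi (size a) v.

Definition permute (N : nat) (sigma : {perm 'I_N}) (v : seq nat) : seq nat :=
  [seq nth 0 v (sigma i) | i <- enum 'I_N].

End Defs.

(* Main.v *)
Require Import Defs.
From mathcomp Require Import all_boot all_order perm.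
From mathcomp Require Import zify.
Set Implicit Arguments. Unset Strict Implicit. Unset Printing Implicit Defensive.

Lemma nth_flatten_unif (T : eqType) (x0 : T) k (ss : seq (seq T)) i :
  (forall s, s \in ss -> size s = k) -> i < size ss * k ->
  nth x0 (flatten ss) i = nth x0 (nth [::] ss (i %/ k)) (i %% k).
Proof.
elim: ss i => [|s ss IH] i Hs //= Hi.
have Hsk : size s = k by apply: Hs; rewrite inE eqxx.
have k0 : 0 < k by move: Hi; rewrite mulSn; case: k {Hs Hsk IH} => //; rewrite muln0.
rewrite nth_cat Hsk.
case: (ltnP i k) => Hik.
  by rewrite divn_small // modn_small.
have -> : i = k + (i - k) by rewrite subnKC.
rewrite addKn IH; last first.
- by move: Hi; rewrite mulSn; lia.
- by move=> s' Hs'; apply: Hs; rewrite inE Hs' orbT.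
rewrite modnDl; congr (nth _ _ _).
by rewrite (divnDl _ (dvdnn k)) divnn k0.
Qed.

Lemma size_flatten_unif (T : eqType) k (ss : seq (seq T)) :
  (forall s, s \in ss -> size s = k) -> size (flatten ss) = size ss * k.
Proof.
elim: ss => [|s ss IH] Hs //=.
rewrite size_cat IH ?Hs ?inE ?eqxx ?mulSn // => s' Hs'.
by apply: Hs; rewrite inE Hs' orbT.
Qed.

Lemma digit0 p x : digit p x 0 = x %% p.
Proof. by rewrite /digit expn0 divn1. Qed.

Lemma digitS p x i : digit p x i.+1 = digit p (x %/ p) i.
Proof. by rewrite /digit expnS divnMA. Qed.

Lemma digit_mod p x i m : 0 < p -> i < m -> digit p (x %% p ^ m) i = digit p x i.
Proof.
move=> p0 im; rewrite /digit.
have E : p ^ m = p ^ i * p ^ (m - i) by rewrite -expnD subnKC // ltnW.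
rewrite divn_modl; last by rewrite E dvdn_mulr.
rewrite E mulKn ?expn_gt0 ?p0 //.
apply: modn_dvdm; apply: dvdn_exp => //; by rewrite subn_gt0.
Qed.

Lemma digit_addhi p x y i m : 0 < p -> i < m -> digit p (x + y * p ^ m) i = digit p x i.
Proof.
move=> p0 im; rewrite /digit.
have E : y * p ^ m = (y * p ^ (m - i)) * p ^ i by rewrite -mulnA -expnD subnK // ltnW.
rewrite E divnDMl ?expn_gt0 ?p0 //.
have [q ->] : exists q, y * p ^ (m - i) = q * p.
  by exists (y * p ^ (m - i).-1); rewrite -mulnA -expnSr prednK // subn_gt0.
by rewrite addnC modnMDl.
Qed.

Lemma digit_top p x y m : 0 < p -> digit p (x + y * p ^ m) m = (x %/ p ^ m + y) %% p.
Proof. by move=> p0; rewrite /digit divnDMl ?expn_gt0 ?p0. Qed.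

Lemma size_Yrec p k : size (Yrec p k) = k.+1.
Proof. by elim: k => //= k IH; rewrite size_cat size_map IH addn1. Qed.

Lemma size_Yrec_row p k r : r \in Yrec p k -> size r = p ^ k.+1.
Proof.
elim: k r => [|k IH] r /=.
  by rewrite inE => /eqP ->; rewrite size_iota expn1.
rewrite mem_cat => /orP [/mapP [r0 Hr0 ->]|].
  rewrite (size_flatten_unif (k := p ^ k.+1)); first by rewrite size_nseq (expnS p k.+1).
  by move=> s /nseqP [-> _]; apply: IH.
rewrite inE => /eqP ->.
rewrite (size_flatten_unif (k := p ^ k.+1)); first by rewrite size_map size_iota (expnS p k.+1).
by move=> s /mapP [j _ ->]; rewrite size_nseq.
Qed.

Lemma Yrec_entry p k i j : 0 < p -> i <= k -> j < p ^ k.+1 ->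
  nth 0 (nth [::] (Yrec p k) i) j = digit p j i.
Proof.
move=> p0; elim: k i j => [|k IH] i j /=.
  rewrite leqn0 => /eqP -> Hj; rewrite expn1 in Hj.
  by rewrite nth_iota // digit0 modn_small.
move=> Hi Hj.
rewrite nth_cat size_map size_Yrec.
case: ltnP => Hik.
  rewrite (nth_map [::]) ?size_Yrec //.
  have Hr : nth [::] (Yrec p k) i \in Yrec p k by rewrite mem_nth ?size_Yrec.
  rewrite (@nth_flatten_unif _ 0 (p ^ k.+1)); last first.
  - by rewrite size_nseq -expnS.
  - by move=> s /nseqP [-> _]; apply: size_Yrec_row.
  have Hd : j %/ p ^ k.+1 < p by rewrite ltn_divLR ?expn_gt0 ?p0 // -expnSr.
  by rewrite nth_nseq Hd IH ?ltn_pmod ?expn_gt0 ?p0 // digit_mod.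
have -> : i = k.+1 by apply/eqP; rewrite eqn_leq Hi Hik.
rewrite subnn /=.
rewrite (@nth_flatten_unif _ 0 (p ^ k.+1)); last first.
- by rewrite size_map size_iota -expnS.
- by move=> s /mapP [j0 _ ->]; rewrite size_nseq.
have Hd : j %/ p ^ k.+1 < p by rewrite ltn_divLR ?expn_gt0 ?p0 // -expnSr.
rewrite (nth_map 0) ?size_iota // nth_nseq ltn_pmod ?expn_gt0 ?p0 //.
by rewrite nth_iota // add0n /digit modn_small.
Qed.

Lemma size_phi p R u : size (phi p R.+2 u) = p ^ R.+1.
Proof. by rewrite /phi /= size_map size_iota. Qed.

Lemma nth_phi p R u j : 0 < p -> j < p ^ R.+1 ->
  nth 0 (phi p R.+2 u) j =
  (digit p u R.+1 + \sum_(i < R.+1) digit p u i * digit p j i) %% p.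
Proof.
move=> p0 Hj; rewrite /phi /= (nth_map 0) ?size_iota // nth_iota // add0n.
congr ((_ + _) %% p); apply: eq_bigr => i _.
by rewrite /Ymat /= Yrec_entry // -ltnS.
Qed.

Lemma core p R a0 V j : 0 < p -> a0 < p -> j < p ^ R.+2 ->
  nth 0 (phi p R.+3 ((a0 + p * V) %% p ^ R.+3)) j =
  nth 0 (phi p R.+2 ((V + a0 * (j %% p) * p ^ R.+1) %% p ^ R.+2)) (j %/ p).
Proof.
move=> p0 a0p Hj.
have Hjp : j %/ p < p ^ R.+1 by rewrite ltn_divLR // -expnSr.
rewrite nth_phi // nth_phi //.
set u := (a0 + p * V) %% p ^ R.+3.
set U := (V + a0 * (j %% p) * p ^ R.+1) %% p ^ R.+2.
have Hu : forall i, i < R.+2 -> digit p u i.+1 = digit p V i.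
  move=> i Hi; rewrite /u digit_mod // digitS; congr digit.
  by rewrite addnC mulnC divnMDl // divn_small // addn0.
have Hu0 : digit p u 0 = a0.
  rewrite digit0 /u modn_dvdm; last by rewrite dvdn_exp.
  by rewrite addnC mulnC modnMDl modn_small.
have HU : forall i, i < R.+1 -> digit p U i = digit p V i.
  by move=> i Hi; rewrite /U digit_mod ?digit_addhi // ltnW.
have HUt : digit p U R.+1 = (V %/ p ^ R.+1 + a0 * (j %% p)) %% p.
  by rewrite /U digit_mod // digit_top.
rewrite big_ord_recl Hu // Hu0 digit0 HUt.
rewrite (eq_bigr (fun i : 'I_R.+1 => digit p V i * digit p (j %/ p) i)); last first.
  move=> i _; have -> : (lift ord0 i : nat) = i.+1 by [].
  by rewrite Hu ?digitS //; exact: (ltnW (ltn_ord i)).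
under [X in _ = _ + X %[mod p]]eq_bigr => i _ do rewrite HU //.
by rewrite /digit !modnDml addnA.
Qed.

Definition gperm (R p i : nat) : nat :=
  i %/ p ^ R.+2 * p ^ R.+2 + (i %% p) * p ^ R.+1 + (i %% p ^ R.+2) %/ p.

Lemma lt_mix a b c x : a < b -> x < c -> a * c + x < b * c.
Proof.
move=> ab xc; apply: (@leq_trans (a.+1 * c)).
  by rewrite mulSnr ltn_add2l.
by rewrite leq_mul2r ab orbT.
Qed.

Lemma inner_lt R p i : 0 < p ->
  (i %% p) * p ^ R.+1 + (i %% p ^ R.+2) %/ p < p ^ R.+2.
Proof.
move=> p0; rewrite (expnS p R.+1); apply: lt_mix; first by rewrite ltn_pmod.
by rewrite ltn_divLR // -expnSr -expnS ltn_pmod ?expn_gt0 ?p0.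
Qed.

Lemma gperm_eq R p i : 0 < p ->
  gperm R p i = (i %/ p ^ R.+2 * p + i %% p) * p ^ R.+1 + (i %% p ^ R.+2) %/ p.
Proof. by move=> p0; rewrite /gperm mulnDl -mulnA -expnS. Qed.

Lemma gperm_lt R p M i : 0 < p -> i < M * p ^ R.+2 -> gperm R p i < M * p ^ R.+2.
Proof.
move=> p0 Hi; rewrite /gperm -addnA; apply: lt_mix; last exact: inner_lt.
by rewrite ltn_divLR // expn_gt0 p0.
Qed.

Lemma gperm_inj R p i j : 0 < p -> gperm R p i = gperm R p j -> i = j.
Proof.
move=> p0 E.
have K0 : 0 < p ^ R.+2 by rewrite expn_gt0 p0.
have E1 : forall k, gperm R p k %/ p ^ R.+2 = k %/ p ^ R.+2.
  by move=> k; rewrite /gperm -addnA divnMDl // (divn_small (inner_lt R k p0)) addn0.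
have E2 : forall k, gperm R p k %% p ^ R.+2 = (k %% p) * p ^ R.+1 + (k %% p ^ R.+2) %/ p.
  by move=> k; rewrite /gperm -addnA modnMDl (modn_small (inner_lt R k p0)).
have Hd : i %/ p ^ R.+2 = j %/ p ^ R.+2 by rewrite -E1 E E1.
have Hm : (i %% p) * p ^ R.+1 + (i %% p ^ R.+2) %/ p =
          (j %% p) * p ^ R.+1 + (j %% p ^ R.+2) %/ p by rewrite -E2 E E2.
have Lt : forall k, (k %% p ^ R.+2) %/ p < p ^ R.+1.
  by move=> k; rewrite ltn_divLR // -expnSr ltn_pmod.
have H1 : i %% p = j %% p.
  by have := congr1 (divn^~ (p ^ R.+1)) Hm; rewrite /= !divnMDl ?expn_gt0 ?p0 // (divn_small (Lt i)) (divn_small (Lt j)) !addn0.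
have H2 : (i %% p ^ R.+2) %/ p = (j %% p ^ R.+2) %/ p.
  by have := congr1 (modn^~ (p ^ R.+1)) Hm; rewrite /= !modnMDl (modn_small (Lt i)) (modn_small (Lt j)).
have Hp : p %| p ^ R.+2 by rewrite dvdn_exp.
have H3 : i %% p ^ R.+2 = j %% p ^ R.+2.
  by rewrite (divn_eq (i %% p ^ R.+2) p) (divn_eq (j %% p ^ R.+2) p) H2 !modn_dvdm // H1.
by rewrite (divn_eq i (p ^ R.+2)) (divn_eq j (p ^ R.+2)) Hd H3.
Qed.

Lemma perm_gperm N R p : 0 < p -> p ^ R.+2 %| N ->
  exists sigma : {perm 'I_N}, forall i : 'I_N, val (sigma i) = gperm R p i.
Proof.
move=> p0 HN.
have Hlt : forall i : 'I_N, gperm R p i < N.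
  move=> i; have := @gperm_lt R p (N %/ p ^ R.+2) i p0; rewrite divnK //; apply; exact: ltn_ord.
pose f (i : 'I_N) : 'I_N := Ordinal (Hlt i).
have finj : injective f.
  by move=> i j /(congr1 val) /= /gperm_inj E; apply: val_inj; apply: E.
by exists (perm finj) => i; rewrite permE.
Qed.

Lemma permute_gperm N R p (sigma : {perm 'I_N}) v :
  (forall i : 'I_N, val (sigma i) = gperm R p i) ->
  permute sigma v = [seq nth 0 v (gperm R p i) | i <- iota 0 N].
Proof.
move=> H; rewrite /permute -val_enum_ord -map_comp; apply: eq_map => i /=.
by rewrite H.
Qed.

Lemma main_eq R p (Z : seq (seq nat)) (f' : seq nat -> nat) (f : seq nat -> nat -> nat) :
  0 < p ->
  (forall z, z \in Z -> exists a0 V, [/\ a0 < p, f' z = (a0 + p * V) %% p ^ R.+3 &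
      forall k, k < p -> f z (k * p ^ R.+1) = (V + a0 * k * p ^ R.+1) %% p ^ R.+2]) ->
  flatten [seq phi p R.+3 (f' z) | z <- Z] =
  [seq nth 0 (flatten [seq phi p R.+2 y | y <- [seq f z x | z <- Z, x <- [seq k * p ^ R.+1 | k <- iota 0 p]]])
       (gperm R p i) | i <- iota 0 (size Z * p ^ R.+2)].
Proof.
move=> p0 Hc.
have K0 : 0 < p ^ R.+2 by rewrite expn_gt0 p0.
have sz1 : size (flatten [seq phi p R.+3 (f' z) | z <- Z]) = size Z * p ^ R.+2.
  rewrite (@size_flatten_unif _ (p ^ R.+2)) ?size_map //.
  by move=> s /mapP [z _ ->]; rewrite size_phi.
apply: (@eq_from_nth _ 0); first by rewrite sz1 size_map size_iota.
rewrite sz1 => i Hi.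
rewrite (nth_map 0) ?size_iota // nth_iota // add0n.
have HiK : i %/ p ^ R.+2 < size Z by rewrite ltn_divLR.
rewrite (@nth_flatten_unif _ 0 (p ^ R.+2)); last first.
- by rewrite size_map.
- by move=> s /mapP [z _ ->]; rewrite size_phi.
rewrite (nth_map [::]) //.
have HK : size Z * p * p ^ R.+1 = size Z * p ^ R.+2 by rewrite -mulnA -expnS.
rewrite (@nth_flatten_unif _ 0 (p ^ R.+1)); last first.
- by rewrite size_map size_allpairs size_map size_iota HK gperm_lt.
- by move=> s /mapP [z _ ->]; rewrite size_phi.
have Lt : (i %% p ^ R.+2) %/ p < p ^ R.+1 by rewrite ltn_divLR // -expnSr ltn_pmod.
have Hip : i %% p < p by rewrite ltn_pmod.
rewrite gperm_eq // divnMDl ?expn_gt0 ?p0 // (divn_small Lt) addn0.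
rewrite modnMDl (modn_small Lt).
rewrite (nth_map 0 [::] (phi p R.+2)); last by rewrite size_allpairs size_map size_iota; apply: lt_mix.
rewrite (@nth_flatten_unif _ 0 p); last first.
- by rewrite size_map; apply: lt_mix.
- by move=> s /mapP [z _ ->]; rewrite !size_map size_iota.
rewrite divnMDl // (divn_small Hip) addn0 modnMDl (modn_small Hip).
rewrite (nth_map [::]) // (nth_map 0 0 (f _)); last by rewrite size_map size_iota.
rewrite (nth_map 0 0 (fun k => k * p ^ R.+1)) ?size_iota // nth_iota // add0n.
have [a0 [V [a0p -> ->]]] := Hc _ (mem_nth [::] HiK) ; last by [].
have <- : (i %% p ^ R.+2) %% p = i %% p by rewrite modn_dvdm // dvdn_exp.
by apply: core; rewrite ?ltn_pmod.
Qed.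

Lemma cprod_cons S0 F : cprod (S0 :: F) = [seq x :: v | x <- S0, v <- cprod F].
Proof. by []. Qed.

Lemma cprod_cat A B : cprod (A ++ B) = [seq z ++ y | z <- cprod A, y <- cprod B].
Proof.
elim: A => [|S0 A IH] /=.
  by rewrite cats0 map_id.
rewrite IH; elim: S0 => [|x S0 IHS] //=.
rewrite allpairs_cat IHS; congr (_ ++ _).
by rewrite map_allpairs allpairs_mapl.
Qed.

Lemma cprod_map g F : cprod [seq map g S0 | S0 <- F] = [seq map g v | v <- cprod F].
Proof.
elim: F => [|S0 F IH] //=.
rewrite IH allpairs_mapl allpairs_mapr map_allpairs.
by [].
Qed.

Lemma cprod_size F v : v \in cprod F -> size v = size F.
Proof.
elim: F v => [|S0 F IH] v /=; first by rewrite inE => /eqP ->.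
by case/allpairsP => [[x w] [_ /IH Hw ->]] /=; rewrite Hw.
Qed.

Lemma cprod1 S0 : cprod [:: S0] = [seq [:: x] | x <- S0].
Proof. by rewrite cprod_cons /= allpairs1r. Qed.

Definition dot (c z : seq nat) := sumn [seq x.1 * x.2 | x <- zip c z].

Lemma dot_nil c : dot c [::] = 0.
Proof. by case: c. Qed.

Lemma dot_cons c x z : dot c (x :: z) = nth 0 c 0 * x + dot (behead c) z.
Proof. by case: c => [|y c] //=; rewrite /dot /= mul0n add0n; case: z. Qed.

Lemma dot_eq c c' z : (forall i, i < size z -> nth 0 c i = nth 0 c' i) -> dot c z = dot c' z.
Proof.
elim: z c c' => [|x z IH] c c' H; first by rewrite !dot_nil.
rewrite !dot_cons (H 0) //; congr (_ + _); apply: IH => i Hi.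
by rewrite !nth_behead; apply: H.
Qed.

Lemma dot_cat c z y : dot c (z ++ y) = dot c z + dot (drop (size z) c) y.
Proof.
elim: z c => [|x z IH] c /=; first by rewrite dot_nil drop0.
by rewrite !dot_cons IH addnA -drop1 drop_drop addn1.
Qed.

Lemma dot_mulp p c z : dot c (map (muln p) z) = p * dot c z.
Proof.
elim: z c => [|x z IH] c /=; first by rewrite !dot_nil muln0.
by rewrite !dot_cons IH mulnDr mulnCA.
Qed.

Lemma dot1 c x : dot c [:: x] = nth 0 c 0 * x.
Proof. by rewrite dot_cons dot_nil addn0. Qed.

Lemma Tset_mul p r i : 0 < i -> map (muln p) (Tset p r i) = Tset p r.+1 i.+1.
Proof.
case: i => // i _; rewrite /Tset -map_comp subSS; apply: eq_map => j /=.
by rewrite expnS mulnCA.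
Qed.

Definition Fm p t1 ts mid :=
  nseq t1.-1 (Tset p (size mid).+2 1) ++
  flatten [seq nseq (nth 0 (t1 :: rcons mid ts) i.-1) (Tset p (size mid).+2 i) | i <- iota 2 (size mid)] ++
  nseq ts.-1 (Tset p (size mid).+2 (size mid).+2).

Lemma factors_t p t1 ts mid : 0 < ts ->
  factors p (t1 :: rcons mid ts) =
  [:: [:: 1]] ++ Fm p t1 ts mid ++ [:: Tset p (size mid).+2 (size mid).+2].
Proof.
move=> ts0; rewrite /factors /Fm /= size_rcons.
have -> : iota 2 (size mid).+1 = iota 2 (size mid) ++ [:: (size mid).+2].
  by rewrite -(addn1 (size mid)) iotaD /= add2n addn1.
rewrite map_cat flatten_cat /= nth_rcons ltnn eqxx cats0.
have -> : nseq ts (Tset p (size mid).+2 (size mid).+2) =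
   nseq ts.-1 (Tset p (size mid).+2 (size mid).+2) ++ [:: Tset p (size mid).+2 (size mid).+2].
  by rewrite -{1}(prednK ts0) -addn1 nseqD.
by rewrite !catA.
Qed.

Lemma factors_t' p t1 ts mid : 0 < ts ->
  factors p (1 :: t1.-1 :: rcons mid ts.-1) =
  [:: [:: 1]] ++ [seq map (muln p) S0 | S0 <- Fm p t1 ts mid].
Proof.
move=> ts0; rewrite /factors /Fm /= size_rcons.
congr (_ :: _).
rewrite !map_cat map_nseq Tset_mul //; congr (_ ++ _).
have -> : iota 3 (size mid).+1 = iota 3 (size mid) ++ [:: (size mid).+3].
  by rewrite -(addn1 (size mid)) iotaD /=; congr (_ ++ [:: _]); lia.
rewrite map_cat flatten_cat /= nth_rcons ltnn eqxx cats0 map_nseq Tset_mul //.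
congr (_ ++ _).
rewrite map_flatten -map_comp -[3]/(1 + 2) iotaDl -map_comp.
congr flatten; apply/eq_in_map => i.
rewrite mem_iota => /andP [H2 H3] /=.
rewrite map_nseq Tset_mul; last by apply: leq_trans H2.
have -> : i = (i - 2).+2 by rewrite -addn2 subnK.
rewrite /= !nth_rcons; congr nseq.
by rewrite !ifT //; lia.
Qed.

Lemma Acols_t p t1 ts mid : 0 < ts ->
  Acols p (t1 :: rcons mid ts) =
  [seq 1 :: (z ++ [:: x]) | z <- cprod (Fm p t1 ts mid), x <- Tset p (size mid).+2 (size mid).+2].
Proof.
move=> ts0; rewrite /Acols factors_t // cat1s cprod_cons allpairs1l cprod_cat cprod1.
by rewrite allpairs_mapr map_allpairs.
Qed.

Lemma Acols_t' p t1 ts mid : 0 < ts ->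
  Acols p (1 :: t1.-1 :: rcons mid ts.-1) =
  [seq 1 :: map (muln p) z | z <- cprod (Fm p t1 ts mid)].
Proof.
move=> ts0; rewrite /Acols factors_t' // cat1s cprod_cons allpairs1l cprod_map -map_comp.
by [].
Qed.

Lemma Tlast p R : Tset p R.+2 R.+2 = [seq k * p ^ R.+1 | k <- iota 0 p].
Proof. by rewrite /Tset subnn expn1. Qed.

Theorem lemma7 (p t1 ts : nat) (mid : seq nat) :
  prime p -> 1 <= t1 -> 1 <= ts ->
  let t := t1 :: rcons mid ts in
  let t' := 1 :: t1.-1 :: rcons mid ts.-1 in
  let N := size (Acols p t) * p ^ (size t).-1 in
  exists sigma : {perm 'I_N},
    forall w : seq nat,
      inPhiH p t' w <-> exists v, inPhiH p t v /\ w = permute sigma v.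
Proof.
move=> Hp Ht1 Hts t t' N.
have p0 : 0 < p by apply: prime_gt0.
set R := size mid.
set Z := cprod (Fm p t1 ts mid).
set L := size (Fm p t1 ts mid).
have HZ : forall z, z \in Z -> size z = L by move=> z /cprod_size.
have st : size t = R.+2 by rewrite /t /= size_rcons.
have st' : size t' = R.+3 by rewrite /t' /= size_rcons.
have HN : N = size Z * p ^ R.+2.
  by rewrite /N st Acols_t // size_allpairs Tlast size_map size_iota -mulnA -expnS.
have HW : forall c, Phi p (size t) (Hword p t c) =
   flatten [seq phi p R.+2 y | y <- [seq dot c (1 :: (z ++ [:: x])) %% p ^ R.+2
                                    | z <- Z, x <- [seq k * p ^ R.+1 | k <- iota 0 p]]].
  by move=> c; rewrite /Phi /Hword st /t Acols_t // map_allpairs Tlast.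
have HW' : forall c, Phi p (size t') (Hword p t' c) =
   flatten [seq phi p R.+3 (dot c (1 :: map (muln p) z) %% p ^ R.+3) | z <- Z].
  by move=> c; rewrite /Phi /Hword st' /t' Acols_t' // -!map_comp.
have [sigma Hsig] : exists sigma : {perm 'I_N}, forall i : 'I_N, val (sigma i) = gperm R p i.
  by apply: perm_gperm => //; rewrite HN dvdn_mull.
exists sigma => w; split.
- case=> v [[c' ->] ->].
  set a := nth 0 c' 0; set d := behead c'.
  pose c := (a %/ p) :: (mkseq (nth 0 d) L ++ [:: a %% p]).
  exists (Phi p (size t) (Hword p t c)); split; first by exists (Hword p t c); split => //; exists c.
  rewrite (permute_gperm _ Hsig) HW HW' HN; apply: main_eq => // z Hz.
  exists (a %% p), (a %/ p + dot d z); split.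
  + by rewrite ltn_pmod.
  + rewrite dot_cons dot_mulp -/a -/d muln1; congr (_ %% _).
    by rewrite {1}(divn_eq a p); lia.
  + move=> k Hk; rewrite dot_cons /= muln1 dot_cat dot1 (HZ _ Hz).
    rewrite drop_size_cat ?size_mkseq //=.
    rewrite (@dot_eq _ d); first by congr (_ %% _); lia.
    move=> i Hi; rewrite nth_cat size_mkseq (HZ _ Hz) in Hi *.
    by rewrite Hi nth_mkseq.
- case=> v [[v0 [[c ->] ->]] ->].
  set c0 := nth 0 c 0; set d := behead c; set e := nth 0 d L.
  pose c' := (p * c0 + e %% p) :: d.
  exists (Hword p t' c'); split; first by exists c'.
  rewrite (permute_gperm _ Hsig) HW HW' HN; symmetry; apply: main_eq => // z Hz.
  exists (e %% p), (c0 + dot d z); split.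
  + by rewrite ltn_pmod.
  + rewrite dot_cons dot_mulp /= muln1; congr (_ %% _); lia.
  + move=> k Hk; rewrite dot_cons dot_cat dot1 nth_drop addn0 (HZ _ Hz) -/c0 -/d -/e muln1.
    rewrite {1}(divn_eq e p).
    have -> : (e %/ p * p + e %% p) * (k * p ^ R.+1) = (e %/ p * k) * p ^ R.+2 + e %% p * k * p ^ R.+1.
      by rewrite (expnS p R.+1) mulnDl !mulnA (mulnAC (e %/ p) p k).
    set X := e %/ p * k; set Y := e %% p * k * p ^ R.+1; set Q := p ^ R.+2.
    have -> : c0 + (dot d z + (X * Q + Y)) = X * Q + (c0 + dot d z + Y) by lia.
    by rewrite modnMDl.
Qed.
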